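(* Let $a,b,c\in\mathbb{Z}_8$. The unary operation $f(x)=ax^3+bx^2+cx$ on $\mathbb{Z}_8$ preserves the relation $Z$ if and only if both $a$ and $b$ are even.
   Context: $P_4$ is the power set of $\{1,2,3,4\}$. For $A\in P_4$, $\mathbf{g}^A\in\mathbb{Z}_8^{P_4}$ is the tuple with $B$-component $1$ if $A\subseteq B$ and $0$ otherwise. Every $\mathbf{u}\in\mathbb{Z}_8^{P_4}$ has a unique expression $\mathbf{u}=\sum_{A\in P_4}a_A\mathbf{g}^A$ with $a_A\in\mathbb{Z}_8$. $Z\subseteq \mathbb{Z}_8^{P_4}$ consists of all $\mathbf{u}$ whose coefficients satisfy: (Z1) $a_{\{2\}}\equiv 2a_{\{1\}}\pmod 4$ and $a_{\{4\}}\equiv 2a_{\{3\}}\pmod 4$; (Z2) $a_A\equiv 0\pmod 2$ whenever $|A|\ge 2$; (Z3) $a_A\equiv 0\pmod 4$ whenever $|A|\ge 2$ and $A\cap\{2,4\}\neq\emptyset$; (Z4) $a_A=0$ whenever $\{2,4\}\subseteq A$. An operation preserves $Z$ if applying it componentwise to elements of $Z$ yields an element of $Z$. *)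

(* Defs.v *)
From HB Require Import structures.
From mathcomp Require Import all_boot all_order all_algebra.
Set Implicit Arguments. Unset Strict Implicit. Unset Printing Implicit Defensive.
Import GRing.Theory.
Local Open Scope ring_scope.

(* The ground set {1,2,3,4} is represented by 'I_4, with element k+1 <-> k.
   So 1 <-> 0, 2 <-> 1, 3 <-> 2, 4 <-> 3. *)
Definition P4 := {set 'I_4}.
Definition Z8 := 'Z_8.
Definition tup := {ffun P4 -> Z8}.

Definition e1 : 'I_4 := @Ordinal 4 0 isT.
Definition e2 : 'I_4 := @Ordinal 4 1 isT.
Definition e3 : 'I_4 := @Ordinal 4 2 isT.
Definition e4 : 'I_4 := @Ordinal 4 3 isT.

Definition gvec (A : P4) : tup := [ffun B : P4 => if A \subset B then 1 else 0].

Definition comb (a : {ffun P4 -> Z8}) : tup :=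
  [ffun B : P4 => \sum_(A : P4) a A * gvec A B].

(* congruences on Z_8 elements via their canonical representatives 0..7 *)
Definition coeffs_ok (a : {ffun P4 -> Z8}) : Prop :=
  (* Z1 *)
  ((a [set e2] : nat) %% 4 = (2 * (a [set e1] : nat)) %% 4)%N /\
  ((a [set e4] : nat) %% 4 = (2 * (a [set e3] : nat)) %% 4)%N /\
  (* Z2 *)
  (forall A : P4, (2 <= #|A|)%N -> (2 %| a A)%N) /\
  (* Z3 *)
  (forall A : P4, (2 <= #|A|)%N -> (e2 \in A) || (e4 \in A) -> (4 %| a A)%N) /\
  (* Z4 *)
  (forall A : P4, e2 \in A -> e4 \in A -> a A = 0).

Definition inZ (u : tup) : Prop :=
  exists a : {ffun P4 -> Z8}, u = comb a /\ coeffs_ok a.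

Definition preservesZ (f : Z8 -> Z8) : Prop :=
  forall u : tup, inZ u -> inZ [ffun B : P4 => f (u B)].

Definition cubic (a b c : Z8) (x : Z8) : Z8 := a * x ^+ 3 + b * x ^+ 2 + c * x.

(* Main.v *)
Require Import Defs.
From mathcomp Require Import all_boot all_order all_algebra.
From mathcomp Require Import ring.

Module S1.
Set Implicit Arguments. Unset Strict Implicit. Unset Printing Implicit Defensive.
Set Implicit Arguments. Unset Strict Implicit. Unset Printing Implicit Defensive.
Import GRing.Theory.
Local Open Scope ring_scope.

Definition b4 := (bool * bool * bool * bool)%type.
Definition mk (y : b4) : P4 :=
  [set i : 'I_4 | nth false [:: y.1.1.1; y.1.1.2; y.1.2; y.2] i].
Definition bits (A : P4) : b4 := (e1 \in A, e2 \in A, e3 \in A, e4 \in A).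

Lemma ord4_cases (i : 'I_4) : i = e1 \/ i = e2 \/ i = e3 \/ i = e4.
Proof.
case: i => [[|[|[|[|n]]]] H].
- by left; apply/val_inj.
- by right; left; apply/val_inj.
- by right; right; left; apply/val_inj.
- by right; right; right; apply/val_inj.
- by [].
Qed.

Lemma bitsK : cancel bits mk.
Proof.
move=> A; apply/setP => i; rewrite inE.
by case: (ord4_cases i) => [->|[->|[->|->]]].
Qed.

Lemma mkK : cancel mk bits.
Proof. by case=> [[[a b] c] d]; rewrite /bits /mk !inE. Qed.

Definition all16 : seq b4 :=
  [:: (true,true,true,true);
      (true,true,true,false);
      (true,true,false,true);
      (true,true,false,false);
      (true,false,true,true);
      (true,false,true,false);
      (true,false,false,true);
      (true,false,false,false);
      (false,true,true,true);
      (false,true,true,false);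
      (false,true,false,true);
      (false,true,false,false);
      (false,false,true,true);
      (false,false,true,false);
      (false,false,false,true);
      (false,false,false,false)].

Lemma mem_all16 y : y \in all16.
Proof. by case: y => [[[[] []] []] []]. Qed.

Lemma perm_all16 : perm_eq (index_enum b4) all16.
Proof.
apply: uniq_perm; first exact: index_enum_uniq.
  by [].
by move=> y; rewrite mem_index_enum mem_all16.
Qed.

Lemma sum_P4 (F : P4 -> Z8) : \sum_(A : P4) F A = \sum_(y <- all16) F (mk y).
Proof.
rewrite (reindex mk); last by apply: onW_bij; exists bits; [exact: mkK | exact: bitsK].
by rewrite (perm_big _ perm_all16).
Qed.

End S1.
Import S1.
Module S2.
Set Implicit Arguments. Unset Strict Implicit. Unset Printing Implicit Defensive.
Set Implicit Arguments. Unset Strict Implicit. Unset Printing Implicit Defensive.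
Import GRing.Theory.
Local Open Scope ring_scope.

Definition leb4 (x y : b4) : bool :=
  [&& x.1.1.1 ==> y.1.1.1, x.1.1.2 ==> y.1.1.2, x.1.2 ==> y.1.2 & x.2 ==> y.2].
Definition cnt (x : b4) : nat := (x.1.1.1 + x.1.1.2 + x.1.2 + x.2)%N.
Definition ind (y z : b4) : Z8 := if leb4 y z then 1 else 0.

Lemma subset_mk x y : (mk x \subset mk y) = leb4 x y.
Proof.
apply/subsetP/idP.
  move=> H; rewrite /leb4; apply/and4P; split; apply/implyP => hx.
  - by have := H e1; rewrite !inE; apply.
  - by have := H e2; rewrite !inE; apply.
  - by have := H e3; rewrite !inE; apply.
  - by have := H e4; rewrite !inE; apply.
case/and4P => /implyP h1 /implyP h2 /implyP h3 /implyP h4 i.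
by case: (ord4_cases i) => [->|[->|[->|->]]]; rewrite !inE.
Qed.

Lemma card_mk x : #|mk x| = cnt x.
Proof.
rewrite -sum1_card big_mkcond /= !big_ord_recl big_ord0 /cnt !inE /=.
by case: x => [[[[] []] []] []].
Qed.

Lemma gvec_mk x y : gvec (mk x) (mk y) = ind x y.
Proof. by rewrite /gvec ffunE subset_mk. Qed.

Definition lsum (f : b4 -> Z8) : Z8 := foldr (fun y acc => f y + acc) 0 all16.

Lemma lsumE (f : b4 -> Z8) : \sum_(y <- all16) f y = lsum f.
Proof. by rewrite /lsum /all16 !big_cons big_nil. Qed.

Lemma eq_lsum f g : f =1 g -> lsum f = lsum g.
Proof. by move=> H; rewrite /lsum; elim: all16 => //= y s ->; rewrite H. Qed.

Lemma comb_mk (a : {ffun P4 -> Z8}) z :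
  comb a (mk z) = lsum (fun y => a (mk y) * ind y z).
Proof. by rewrite /comb ffunE sum_P4 lsumE; apply: eq_lsum => y; rewrite gvec_mk. Qed.

Definition sgn (n : nat) : Z8 := if odd n then -1 else 1.
Definition mobc (h : b4 -> Z8) (x : b4) : Z8 :=
  lsum (fun y => if leb4 y x then sgn (cnt x - cnt y) * h y else 0).
Definition combc (b : b4 -> Z8) (z : b4) : Z8 := lsum (fun y => b y * ind y z).

Definition okc (b : b4 -> Z8) : bool :=
  [&& (val (b (false,true,false,false)) %% 4 == (2 * val (b (true,false,false,false))) %% 4)%N,
      (val (b (false,false,false,true)) %% 4 == (2 * val (b (false,false,true,false))) %% 4)%N,
      all (fun x => (2 <= cnt x)%N ==> (2 %| val (b x))%N) all16,
      all (fun x => (2 <= cnt x)%N ==> (x.1.1.2 || x.2) ==> (4 %| val (b x))%N) all16 &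
      all (fun x => x.1.1.2 ==> x.2 ==> (b x == 0)) all16].

Definition check (h : b4 -> Z8) : bool :=
  let b := fun x => mobc h x in
  all (fun z => combc b z == h z) all16 && okc b.

Lemma bits_set1 i : bits [set i] = (i == e1, i == e2, i == e3, i == e4).
Proof. by rewrite /bits !in_set1 ![_ == i]eq_sym. Qed.

Lemma check_inZ (h : b4 -> Z8) : check h -> inZ [ffun B => h (bits B)].
Proof.
case/andP => /allP Hc /and5P [Z1 Z2 /allP Z3 /allP Z4 /allP Z5].
exists [ffun A => mobc h (bits A)]; split.
  apply/ffunP => B; rewrite ffunE -{2}(bitsK B) comb_mk.
  rewrite -(eqP (Hc _ (mem_all16 (bits B)))) /combc.
  by apply: eq_lsum => y; rewrite ffunE mkK.
split; first by rewrite !ffunE !bits_set1; apply/eqP.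
split; first by rewrite !ffunE !bits_set1; apply/eqP.
split.
  move=> A; rewrite ffunE -{1}(bitsK A) card_mk => H.
  by have := Z3 _ (mem_all16 (bits A)); rewrite H.
split.
  move=> A; rewrite ffunE -{1}(bitsK A) card_mk => H H'.
  by have := Z4 _ (mem_all16 (bits A)); rewrite H H'.
move=> A H H'; rewrite ffunE.
by have := Z5 _ (mem_all16 (bits A)); rewrite /= H H' => /eqP.
Qed.

End S2.
Import S2.
Module S3.
Set Implicit Arguments. Unset Strict Implicit. Unset Printing Implicit Defensive.
Set Implicit Arguments. Unset Strict Implicit. Unset Printing Implicit Defensive.
Import GRing.Theory.

Definition lsumn (f : b4 -> nat) : nat := foldr (fun y acc => f y + acc) 0 all16.
Definition indn (y z : b4) : nat := if leb4 y z then 1 else 0.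
Definition mobn (h : b4 -> nat) (x : b4) : nat :=
  (lsumn (fun y => if leb4 y x then (if odd (cnt x - cnt y) then 7 * h y else h y) else 0)) %% 8.
Definition combn (b : b4 -> nat) (z : b4) : nat := (lsumn (fun y => b y * indn y z)) %% 8.
Definition okn (b : b4 -> nat) : bool :=
  [&& (b (false,true,false,false) %% 4 == (2 * b (true,false,false,false)) %% 4),
      (b (false,false,false,true) %% 4 == (2 * b (false,false,true,false)) %% 4),
      all (fun x => (2 <= cnt x) ==> (2 %| b x)) all16,
      all (fun x => (2 <= cnt x) ==> (x.1.1.2 || x.2) ==> (4 %| b x)) all16 &
      all (fun x => x.1.1.2 ==> x.2 ==> (b x == 0)) all16].
Definition memo (h : b4 -> nat) : b4 -> nat :=
  let l := map h all16 in fun y => nth 0 l (index y all16).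
Definition checkn (h0 : b4 -> nat) : bool :=
  let h := memo h0 in let b := memo (mobn h) in
  all (fun z => combn b z == h z %% 8) all16 && okn b.

Lemma memoE h y : memo h y = h y.
Proof. by rewrite /memo (nth_map y) ?nth_index ?index_mem ?mem_all16. Qed.

Lemma eq_lsumn f g : f =1 g -> lsumn f = lsumn g.
Proof. by move=> H; rewrite /lsumn; elim: all16 => //= y s ->; rewrite H. Qed.

Lemma mobn_ext h h' : h =1 h' -> mobn h =1 mobn h'.
Proof. by move=> H x; rewrite /mobn; congr (_ %% _); apply: eq_lsumn => y; rewrite H. Qed.

Lemma okn_ext b b' : b =1 b' -> okn b = okn b'.
Proof.
move=> H; rewrite /okn !H; congr [&& _, _, _, _ & _];
  by apply: eq_all => x; rewrite H.
Qed.

Lemma checkn_spec h : checkn h ->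
  (forall z, combn (mobn h) z = h z %% 8) /\ okn (mobn h).
Proof.
rewrite /checkn => /andP [/allP H1 H2]; split; last first.
  by move: H2; rewrite (okn_ext (memoE (mobn (memo h)))) (okn_ext (mobn_ext (memoE h))).
move=> z; have /eqP := H1 z (mem_all16 z); rewrite memoE => <-.
rewrite /combn; congr (_ %% _); try (apply: eq_lsumn => y;
by rewrite memoE (mobn_ext (fun x => memoE h x))).
Qed.

Local Open Scope ring_scope.

Lemma valZ8 n : val (n%:R : Z8) = (n %% 8)%N.
Proof. exact: (val_Zp_nat (p:=8)). Qed.

Lemma Z8mod n : ((n %% 8)%:R : Z8) = n%:R.
Proof. exact: (Zp_nat_mod (p:=8)). Qed.

Lemma lsum_nat f : lsum (fun y => (f y)%:R) = (lsumn f)%:R.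
Proof. rewrite /lsum /lsumn; elim: all16 => //= y s ->; by rewrite natrD. Qed.

Lemma mobn_lt h x : (mobn h x < 8)%N.
Proof. by rewrite /mobn ltn_pmod. Qed.

Lemma checkn_inZ (hn : b4 -> nat) : checkn hn -> inZ [ffun B => (hn (bits B))%:R].
Proof.
case/checkn_spec => Hc /and5P [Z1 Z2 /allP Z3 /allP Z4 /allP Z5].
have vb : forall x, val ((mobn hn x)%:R : Z8) = mobn hn x.
  by move=> x; rewrite valZ8 modn_small // mobn_lt.
exists [ffun A => (mobn hn (bits A))%:R]; split.
  apply/ffunP => B; rewrite ffunE -{2}(bitsK B) comb_mk.
  rewrite -Z8mod -Hc /combn Z8mod -lsum_nat.
  by apply: eq_lsum => y; rewrite ffunE mkK natrM /ind /indn; case: leb4.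
split; first by rewrite !ffunE !bits_set1 !vb; apply/eqP.
split; first by rewrite !ffunE !bits_set1 !vb; apply/eqP.
split.
  move=> A; rewrite ffunE vb -{1}(bitsK A) card_mk => H.
  by have := Z3 _ (mem_all16 (bits A)); rewrite H.
split.
  move=> A; rewrite ffunE vb -{1}(bitsK A) card_mk => H H'.
  by have := Z4 _ (mem_all16 (bits A)); rewrite H H'.
move=> A H H'; rewrite ffunE.
by have := Z5 _ (mem_all16 (bits A)); rewrite /= H H' => /eqP ->.
Qed.

End S3.
Import S3.
Module S4.
Set Implicit Arguments. Unset Strict Implicit. Unset Printing Implicit Defensive.
Set Implicit Arguments. Unset Strict Implicit. Unset Printing Implicit Defensive.
Import GRing.Theory.
Local Open Scope ring_scope.

Definition Z8l : seq Z8 := [seq i%:R | i <- iota 0 8].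

Lemma mem_Z8l (x : Z8) : x \in Z8l.
Proof.
rewrite -(natr_Zp x); apply: map_f; rewrite mem_iota /=.
by have := ltn_ord x.
Qed.

Lemma Z8_all1 (P : Z8 -> bool) : all P Z8l -> forall x, P x.
Proof. by move=> /allP H x; apply: H; apply: mem_Z8l. Qed.
Lemma Z8_all2 (P : Z8 -> Z8 -> bool) :
  all (fun x => all (P x) Z8l) Z8l -> forall x y, P x y.
Proof. by move=> H x y; apply: (Z8_all1 (Z8_all1 H x)). Qed.

Lemma Z8_all4 (P : Z8 -> Z8 -> Z8 -> Z8 -> bool) :
  all (fun x => all (fun y => all (fun z => all (P x y z) Z8l) Z8l) Z8l) Z8l ->
  forall x y z w, P x y z w.
Proof. by move=> H x y z w; apply: (Z8_all1 (Z8_all1 (Z8_all1 (Z8_all1 H x) y) z)). Qed.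

Lemma div4E_b : forall d : Z8, (4 %| val d)%N ==> (d == 4 * ((val d %/ 4)%N%:R)).
Proof. by apply: Z8_all1; vm_compute. Qed.
Lemma div4E (d : Z8) : (4 %| val d)%N -> d = 4 * ((val d %/ 4)%N%:R).
Proof. by move=> H; have /implyP/(_ H)/eqP := div4E_b d. Qed.

Lemma div2E_b : forall d : Z8, (2 %| val d)%N ==> (d == 2 * ((val d %/ 2)%N%:R)).
Proof. by apply: Z8_all1; vm_compute. Qed.
Lemma div2E (d : Z8) : (2 %| val d)%N -> d = 2 * ((val d %/ 2)%N%:R).
Proof. by move=> H; have /implyP/(_ H)/eqP := div2E_b d. Qed.

Lemma r4_lem : forall x : Z8, dvdn 4 (val (x - (modn (val x) 4)%:R)).
Proof. by apply: Z8_all1; vm_compute. Qed.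

Lemma z1_lem : forall x1 x2 : Z8,
  (modn (val x2) 4 == modn (muln 2 (val x1)) 4) ==> dvdn 4 (val (x2 - (muln 2 (modn (val x1) 4))%:R)).
Proof. by apply: Z8_all2; vm_compute. Qed.

Lemma m2_lem : forall x : Z8,
  dvdn 2 (val x) ==> dvdn 4 (val (x - (muln 2 (modn (divn (val x) 2) 2))%:R)).
Proof. by apply: Z8_all1; vm_compute. Qed.

Lemma cube_lem : forall s w : Z8, 2 * (s + 4 * w) ^+ 3 == 2 * s ^+ 3.
Proof. by apply: Z8_all2; vm_compute. Qed.

Lemma sq_lem : forall s w : Z8, 2 * (s + 4 * w) ^+ 2 == 2 * s ^+ 2.
Proof. by apply: Z8_all2; vm_compute. Qed.

Lemma add_z1 : forall x1 x2 y1 y2 : Z8,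
  (modn (val x2) 4 == modn (muln 2 (val x1)) 4) ==> (modn (val y2) 4 == modn (muln 2 (val y1)) 4) ==>
  (modn (val (x2 + y2)) 4 == modn (muln 2 (val (x1 + y1))) 4).
Proof. apply: Z8_all4; time vm_compute; reflexivity. Qed.

Lemma add_d2 : forall x y : Z8, dvdn 2 (val x) ==> dvdn 2 (val y) ==> dvdn 2 (val (x + y)).
Proof. by apply: Z8_all2; vm_compute. Qed.

Lemma add_d4 : forall x y : Z8, dvdn 4 (val x) ==> dvdn 4 (val y) ==> dvdn 4 (val (x + y)).
Proof. by apply: Z8_all2; vm_compute. Qed.

End S4.
Import S4.
Module S5.
Set Implicit Arguments. Unset Strict Implicit. Unset Printing Implicit Defensive.
Set Implicit Arguments. Unset Strict Implicit. Unset Printing Implicit Defensive.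
Import GRing.Theory.
Local Open Scope ring_scope.

Lemma inZ0 : inZ [ffun _ => 0].
Proof.
exists [ffun _ => 0]; split.
  by apply/ffunP => B; rewrite /comb !ffunE big1 // => A _; rewrite ffunE mul0r.
by rewrite /coeffs_ok; split; [|split; [|split; [|split]]] => *; rewrite ?ffunE.
Qed.

Lemma inZ_add (v w : tup) : inZ v -> inZ w -> inZ [ffun B => v B + w B].
Proof.
case=> [a [-> [A1 [A2 [A3 [A4 A5]]]]]] [b [-> [B1 [B2 [B3 [B4 B5]]]]]].
exists [ffun A => a A + b A]; split.
  apply/ffunP => B; rewrite /comb !ffunE -big_split /=.
  by apply: eq_bigr => A _; rewrite !ffunE; case: (A \subset B); rewrite ?mulr1 ?mulr0 ?addr0.
split.
  rewrite !ffunE; apply/eqP; have := add_z1 (a [set e1]) (a [set e2]) (b [set e1]) (b [set e2]).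
  by rewrite A1 B1 !eqxx.
split.
  rewrite !ffunE; apply/eqP; have := add_z1 (a [set e3]) (a [set e4]) (b [set e3]) (b [set e4]).
  by rewrite A2 B2 !eqxx.
split.
  by move=> A H; rewrite ffunE; have := add_d2 (a A) (b A); rewrite A3 // B3.
split.
  by move=> A H H'; rewrite ffunE; have := add_d4 (a A) (b A); rewrite A4 // B4.
by move=> A H H'; rewrite ffunE A5 // B5 // addr0.
Qed.

Lemma inZ_eq (v w : tup) : v = w -> inZ v -> inZ w.
Proof. by move=> ->. Qed.

Lemma inZ_muln (v : tup) n : inZ v -> inZ [ffun B => v B *+ n].
Proof.
move=> Hv; elim: n => [|n IH].
  by apply: inZ_eq inZ0; apply/ffunP => B; rewrite !ffunE.
apply: inZ_eq (inZ_add Hv IH).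
by apply/ffunP => B; rewrite !ffunE mulrS.
Qed.

Lemma inZ_scale (v : tup) (k : Z8) : inZ v -> inZ [ffun B => k * v B].
Proof.
move=> /(inZ_muln (val k)); apply: inZ_eq.
by apply/ffunP => B; rewrite !ffunE -mulr_natl natr_Zp.
Qed.


End S5.
Import S5.
Module S6.
Set Implicit Arguments. Unset Strict Implicit. Unset Printing Implicit Defensive.
Set Implicit Arguments. Unset Strict Implicit. Unset Printing Implicit Defensive.
Import GRing.Theory.

Definition cn (n0 n1 n3 nm : nat) (y : b4) : nat :=
  if y == (false,false,false,false) then n0
  else if y == (true,false,false,false) then n1
  else if y == (false,true,false,false) then 2 * n1
  else if y == (false,false,true,false) then n3
  else if y == (false,false,false,true) then 2 * n3
  else if y == (true,false,true,false) then 2 * nm else 0.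

Definition Sn n0 n1 n3 nm (z : b4) : nat :=
  lsumn (fun y => cn n0 n1 n3 nm y * indn y z) %% 8.

Lemma bigcheck : all (fun n0 => all (fun n1 => all (fun n3 => all (fun nm =>
   checkn (fun z => 2 * Sn n0 n1 n3 nm z ^ 3) && checkn (fun z => 2 * Sn n0 n1 n3 nm z ^ 2))
   (iota 0 2)) (iota 0 4)) (iota 0 4)) (iota 0 4).
Proof. vm_compute. reflexivity. Qed.

Lemma bigcheck_at n0 n1 n3 nm : n0 < 4 -> n1 < 4 -> n3 < 4 -> nm < 2 ->
  checkn (fun z => 2 * Sn n0 n1 n3 nm z ^ 3) && checkn (fun z => 2 * Sn n0 n1 n3 nm z ^ 2).
Proof.
move=> h0 h1 h3 hm.
have /allP/(_ n0) := bigcheck; rewrite mem_iota h0 => /(_ isT).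
move/allP/(_ n1); rewrite mem_iota h1 => /(_ isT).
move/allP/(_ n3); rewrite mem_iota h3 => /(_ isT).
by move/allP/(_ nm); rewrite mem_iota hm => /(_ isT).
Qed.

Local Open Scope ring_scope.

Lemma lsumD f g : lsum (fun y => f y + g y) = lsum f + lsum g.
Proof.
rewrite /lsum; elim: all16 => /= [|y s ->]; first by rewrite addr0.
by rewrite !addrA; congr (_ + _); rewrite -!addrA [g y + _]addrC.
Qed.

Lemma lsumZ (k : Z8) f : lsum (fun y => k * f y) = k * lsum f.
Proof. by rewrite /lsum; elim: all16 => /= [|y s ->]; rewrite ?mulr0 ?mulrDr. Qed.

Lemma ind_nat y z : ind y z = (indn y z)%:R.
Proof. by rewrite /ind /indn; case: leb4. Qed.

Lemma mk_set1 : [set e1] = mk (true,false,false,false) /\ [set e2] = mk (false,true,false,false)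
  /\ [set e3] = mk (false,false,true,false) /\ [set e4] = mk (false,false,false,true).
Proof. by split; [|split; [|split]]; rewrite -[LHS]bitsK bits_set1. Qed.

Lemma in_mk2 y : (e2 \in mk y) = y.1.1.2.
Proof. by rewrite inE. Qed.
Lemma in_mk4 y : (e4 \in mk y) = y.2.
Proof. by rewrite inE. Qed.

Lemma pow_inZ (u : tup) : inZ u -> inZ [ffun B => 2 * u B ^+ 3] /\ inZ [ffun B => 2 * u B ^+ 2].
Proof.
case=> al [-> [A1 [A2 [A3 [A4 _]]]]].
case: mk_set1 => s1 [s2 [s3 s4]].
rewrite s1 s2 in A1; rewrite s3 s4 in A2.
set n0 := (val (al (mk (false,false,false,false))) %% 4)%N.
set n1 := (val (al (mk (true,false,false,false))) %% 4)%N.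
set n3 := (val (al (mk (false,false,true,false))) %% 4)%N.
set nm := ((val (al (mk (true,false,true,false))) %/ 2) %% 2)%N.
pose c y : Z8 := (cn n0 n1 n3 nm y)%:R.
have D : forall y, dvdn 4 (val (al (mk y) - c y)).
  have G : forall y, (2 <= cnt y)%N -> y.1.1.2 || y.2 -> dvdn 4 (val (al (mk y) - c y)).
    move=> y Hc Hy; have := A4 (mk y); rewrite card_mk in_mk2 in_mk4 => /(_ Hc Hy).
    case: y Hc Hy => [[[[] []] []] []] // _ _ H;
      by rewrite /c (_ : cn _ _ _ _ _ = 0%N) // mulr0n subr0.
  case=> [[[[] []] []] []]; try (apply: G; done); rewrite /c /cn.
  - have := A3 (mk (true,false,true,false)); rewrite card_mk => /(_ isT) H.
    by have /implyP := m2_lem (al (mk (true,false,true,false))); apply.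
  - exact: r4_lem.
  - have /implyP := z1_lem (al (mk (true,false,false,false))) (al (mk (false,true,false,false))); apply.
    by apply/eqP.
  - exact: r4_lem.
  - have /implyP := z1_lem (al (mk (false,false,true,false))) (al (mk (false,false,false,true))); apply.
    by apply/eqP.
  - exact: r4_lem.
pose K y : Z8 := (divn (val (al (mk y) - c y)) 4)%:R.
have E : forall y, al (mk y) = c y + 4 * K y.
  by move=> y; rewrite -(div4E (D y)) addrC subrK.
have hn0 : (n0 < 4)%N by rewrite ltn_pmod.
have hn1 : (n1 < 4)%N by rewrite ltn_pmod.
have hn3 : (n3 < 4)%N by rewrite ltn_pmod.
have hnm : (nm < 2)%N by rewrite ltn_pmod.
have uE : forall B, comb al B = (lsumn (fun y => cn n0 n1 n3 nm y * indn y (bits B)))%:R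
                                + 4 * lsum (fun y => K y * ind y (bits B)).
  move=> B; rewrite -{1}(bitsK B) comb_mk.
  rewrite -lsum_nat -lsumZ -lsumD; apply: eq_lsum => y.
  by rewrite E mulrDl natrM ind_nat mulrA.
case/andP: (bigcheck_at hn0 hn1 hn3 hnm) => C3 C2.
split.
  apply: inZ_eq (checkn_inZ C3); apply/ffunP => B; rewrite [LHS]ffunE [RHS]ffunE uE.
  by rewrite (eqP (cube_lem _ _)) /Sn natrM natrX Z8mod.
apply: inZ_eq (checkn_inZ C2); apply/ffunP => B; rewrite [LHS]ffunE [RHS]ffunE uE.
by rewrite (eqP (sq_lem _ _)) /Sn natrM natrX Z8mod.
Qed.

End S6.
Import S6.
Module S7.
Set Implicit Arguments. Unset Strict Implicit. Unset Printing Implicit Defensive.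
Set Implicit Arguments. Unset Strict Implicit. Unset Printing Implicit Defensive.
Import GRing.Theory.
Local Open Scope ring_scope.



Lemma final_b : all (fun a : Z8 => all (fun b : Z8 => all (fun c : Z8 =>
  (modn (val (cubic a b c 2 - cubic a b c 0)) 4 == modn (muln 2 (val (cubic a b c 1 - cubic a b c 0))) 4)
  ==> dvdn 4 (val (cubic a b c 3 - cubic a b c 1 - cubic a b c 2 + cubic a b c 0))
  ==> (dvdn 2 (val a) && dvdn 2 (val b))) Z8l) Z8l) Z8l.
Proof. time vm_compute. reflexivity. Qed.

Lemma ind_sum (F : b4 -> Z8) z : lsum (fun y => F y * ind y z) = lsum (fun y => if leb4 y z then F y else 0).
Proof. by apply: eq_lsum => y; rewrite /ind; case: leb4; rewrite ?mulr1 ?mulr0. Qed.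

Definition al0 : {ffun P4 -> Z8} :=
  [ffun A => if bits A == (true,false,false,false) then 1
             else if bits A == (false,true,false,false) then 2 else 0].

Lemma al0_mk y : al0 (mk y) = if y == (true,false,false,false) then 1
             else if y == (false,true,false,false) then 2 else 0.
Proof. by rewrite ffunE mkK. Qed.

Lemma al0_ok : coeffs_ok al0.
Proof.
have big0 : forall A : P4, (1 < #|A|)%N -> al0 A = 0.
  move=> A; rewrite -(bitsK A) card_mk al0_mk.
  by case: (bits A) => [[[[] []] []] []].
split; first by rewrite !ffunE !bits_set1.
split; first by rewrite !ffunE !bits_set1.
split; first by move=> A /big0 ->.
split; first by move=> A /big0 ->.
move=> A; rewrite -(bitsK A) al0_mk in_mk2 in_mk4.
by case: (bits A) => [[[[] []] []] []].
Qed.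

End S7.
Import S7.
Import GRing.Theory.
Local Open Scope ring_scope.
Theorem lemma3p7 (a b c : Z8) :
  preservesZ (cubic a b c) <-> ((2 %| a)%N /\ (2 %| b)%N).
Proof.
split.
  move=> H.
  have Hu : inZ (comb al0) by exists al0; split => //; exact: al0_ok.
  case: (H _ Hu) => be [Hbe [B1 [_ [_ [B4 _]]]]].
  have ev : forall z, cubic a b c (comb al0 (mk z)) = lsum (fun y => if leb4 y z then be (mk y) else 0).
    move=> z; by rewrite -ind_sum -comb_mk -Hbe [RHS]ffunE.
  have u0 : comb al0 (mk (false,false,false,false)) = 0.
    by rewrite comb_mk ind_sum /lsum /= !al0_mk /= !addr0.
  have u1 : comb al0 (mk (true,false,false,false)) = 1.
    by rewrite comb_mk ind_sum /lsum /= !al0_mk /= ?addr0 ?add0r.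
  have u2 : comb al0 (mk (false,true,false,false)) = 2.
    by rewrite comb_mk ind_sum /lsum /= !al0_mk /= ?addr0 ?add0r.
  have u3 : comb al0 (mk (true,true,false,false)) = 3.
    by rewrite comb_mk ind_sum /lsum /= !al0_mk /= ?addr0 ?add0r.
  have E0 := ev (false,false,false,false); rewrite u0 /lsum /= ?add0r in E0.
  have E1 := ev (true,false,false,false); rewrite u1 /lsum /= ?addr0 ?add0r in E1.
  have E2 := ev (false,true,false,false); rewrite u2 /lsum /= ?addr0 ?add0r in E2.
  have E3 := ev (true,true,false,false); rewrite u3 /lsum /= ?addr0 ?add0r in E3.
  case: mk_set1 => s1 [s2 _]; rewrite s1 s2 in B1.
  have B4' := B4 (mk (true,true,false,false)); rewrite card_mk in_mk2 in_mk4 in B4'.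
  have X := B4' isT isT.
  have F1 : cubic a b c 1 - cubic a b c 0 = be (mk (true,false,false,false)) by rewrite E1 E0; ring.
  have F2 : cubic a b c 2 - cubic a b c 0 = be (mk (false,true,false,false)) by rewrite E2 E0; ring.
  have F3 : cubic a b c 3 - cubic a b c 1 - cubic a b c 2 + cubic a b c 0 = be (mk (true,true,false,false)).
    by rewrite E3 E2 E1 E0; ring.
  have /allP/(_ a (mem_Z8l a))/allP/(_ b (mem_Z8l b))/allP/(_ c (mem_Z8l c)) := final_b.
  rewrite F1 F2 F3 B1 eqxx X /= => /andP [].
  done.
case=> /div2E Ha /div2E Hb u Hu.
case: (pow_inZ Hu) => P3 P2.
set a' := (val a %/ 2)%N%:R in Ha; set b' := (val b %/ 2)%N%:R in Hb.
apply: inZ_eq (inZ_add (inZ_add (inZ_scale a' P3) (inZ_scale b' P2)) (inZ_scale c Hu)).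
apply/ffunP => B; rewrite !ffunE /cubic Ha Hb; ring.
Qed.
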